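(* Let $f:\mathbb{R}^n\to\mathbb{R}_{>0}$ be a twice continuously differentiable convex function that is $\gamma$-second order robust and $\mu$-multiplicatively smooth with respect to the $\ell_2$ norm, for some $\gamma,\mu>0$. Let $\mathbf{x},\mathbf{x}^*\in\mathbb{R}^n$ and $R>0$ with $\|\mathbf{x}-\mathbf{x}^*\|_2\le R$. Let $\mathbf{x}'=\mathbf{x}-\eta\nabla f(\mathbf{x})$ with $\eta=\min\bigl\{\frac1{2\mu f(\mathbf{x})},\frac1{\gamma\|\nabla f(\mathbf{x})\|_2}\bigr\}$. If $f(\mathbf{x})>f(\mathbf{x}^* )$, then $$f(\mathbf{x})-f(\mathbf{x}')\ge\min\Bigl\{\frac{(f(\mathbf{x})-f(\mathbf{x}^* ))^2}{4\mu f(\mathbf{x})R^2},\frac{f(\mathbf{x})-f(\mathbf{x}^* )}{2\gamma R}\Bigr\},$$ and if moreover $f(\mathbf{x}')>f(\mathbf{x}^* )$ then $\|\mathbf{x}'-\mathbf{x}^*\|_2\le\|\mathbf{x}-\mathbf{x}^*\|_2$. If $f(\mathbf{x})\le f(\mathbf{x}^* )$, then $f(\mathbf{x}')\le f(\mathbf{x})$.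
   Context: $f$ is $q$-second order robust w.r.t. a norm $\|\cdot\|$ if $\|\mathbf{x}'-\mathbf{x}\|\le1/q$ implies $\tfrac12\nabla^2f(\mathbf{x})\preceq\nabla^2f(\mathbf{x}')\preceq2\nabla^2f(\mathbf{x})$; $f>0$ is $\mu$-multiplicatively smooth w.r.t. $\|\cdot\|$ if $\tilde{\mathbf{x}}^\top\nabla^2f(\mathbf{x})\tilde{\mathbf{x}}\le\mu f(\mathbf{x})\|\tilde{\mathbf{x}}\|^2$ for all $\mathbf{x},\tilde{\mathbf{x}}$. If $\nabla f(\mathbf{x})=\mathbf{0}$ the second term in the step size is read as $+\infty$. *)

(* Defs.v *)
From HB Require Import structures.
From mathcomp Require Import all_boot all_order all_algebra.
From mathcomp Require Import all_classical all_reals all_analysis.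
Set Implicit Arguments. Unset Strict Implicit. Unset Printing Implicit Defensive.
Import Order.TTheory GRing.Theory Num.Theory.
Import numFieldNormedType.Exports.
Local Open Scope ring_scope.

Section Defs.
Variables (R : realType) (n : nat).
Implicit Types (f : 'rV[R]_n -> R) (x y v : 'rV[R]_n).

Definition ebasis (i : 'I_n) : 'rV[R]_n := delta_mx 0 i.

Definition l2norm v : R := Num.sqrt (\sum_(i < n) v 0 i ^+ 2).

Definition partial f (i : 'I_n) (x : 'rV[R]_n) : R := derive f x (ebasis i).

Definition grad f x : 'rV[R]_n := \row_(i < n) partial f i x.

Definition hessian f x : 'M[R]_n :=
  \matrix_(i < n, j < n) partial (partial f j) i x.

Definition quadf (H : 'M[R]_n) v : R := (v *m H *m v^T) 0 0.

Definition C2 f : Prop :=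
  (forall x, differentiable f x) /\
  (forall i x, differentiable (partial f i) x) /\
  (forall i j, continuous (partial (partial f j) i)).

Definition convex_fun f : Prop :=
  forall x y (t : R), 0 <= t <= 1 ->
    f (t *: x + (1 - t) *: y) <= t * f x + (1 - t) * f y.

Definition second_order_robust (q : R) f : Prop :=
  forall x x', l2norm (x' - x) <= 1 / q ->
    forall v, (1/2) * quadf (hessian f x) v <= quadf (hessian f x') v /\
              quadf (hessian f x') v <= 2 * quadf (hessian f x) v.

Definition mult_smooth (mu : R) f : Prop :=
  (forall x, 0 < f x) /\
  forall x v, quadf (hessian f x) v <= mu * f x * l2norm v ^+ 2.

(* step size eta = min{1/(2 mu f x), 1/(gamma ||grad f x||)}, second term = +oo
   when the gradient vanishes *)
Definition step_size (mu gamma : R) f x : R :=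
  if grad f x == 0 then 1 / (2 * mu * f x)
  else Num.min (1 / (2 * mu * f x)) (1 / (gamma * l2norm (grad f x))).

Definition gd_step (mu gamma : R) f x : 'rV[R]_n :=
  x - step_size mu gamma f x *: grad f x.

End Defs.

(* Main.v *)
Set Warnings "-all".
Require Import Defs.
From HB Require Import structures.
From mathcomp Require Import all_boot all_order all_algebra.
From mathcomp Require Import all_classical all_reals all_analysis.
From mathcomp Require Import ring lra.
Import Order.TTheory GRing.Theory Num.Theory.
Import numFieldNormedType.Exports.
Local Open Scope ring_scope.
Lemma isd {R : realType} {f : R -> R} {x d : R} :
  is_derive x (1:R) f d -> derivable f x 1.
Proof. by case. Qed.

Lemma taylor2 (R : realType) (g g1 g2 : R -> R) (M : R) :
  (forall t : R, is_derive t (1:R) g (g1 t)) ->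
  (forall t : R, is_derive t (1:R) g1 (g2 t)) ->
  (forall t, 0 <= t <= 1 -> g2 t <= M) ->
  g 1 <= g 0 + g1 0 + M / 2.
Proof.
move=> dg dg1 hM.
pose h := fun t : R => g t - (g1 0 * t + M / 2 * t ^+ 2).
pose h1 := fun t : R => g1 t - (g1 0 + M * t).
have dh : forall t : R, is_derive t (1:R) h (h1 t).
  move=> t.
  have d1 : is_derive t (1:R) (fun s : R => g1 0 * s) (g1 0).
    have H := is_deriveZ (g1 0) (is_derive_id t (1:R)).
    apply: (is_derive_eq H). rewrite /GRing.scale /=. ring.
  have d2 : is_derive t (1:R) (fun s : R => M / 2 * s ^+ 2) (M * t).
    have H := is_deriveZ (M/2) (is_deriveX 2 (is_derive_id t (1:R))).
    apply: (is_derive_eq H). rewrite /= expr1 /GRing.scale /=. by field.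
  have H := is_deriveB (dg t) (is_deriveD d1 d2).
  exact: H.
have [c c01 hc] := MVT ltr01 (fun t _ => dh t)
  (derivable_within_continuous (fun t _ => isd (dh t) : derivable h t 1)).
have c0 : 0 < c by move: c01; rewrite in_itv /= => /andP[].
have c1 : c < 1 by move: c01; rewrite in_itv /= => /andP[].
have [d d0c hd] := MVT c0 (fun t _ => dg1 t)
  (derivable_within_continuous (fun t _ => isd (dg1 t) : derivable g1 t 1)).
have hdM : g2 d <= M.
  apply: hM; move: d0c; rewrite in_itv /= => /andP[d0 dc].
  apply/andP; split; [exact: ltW | exact: ltW (lt_trans dc c1)].
have : h 1 - h 0 <= 0.
  rewrite hc /h1 subr0 mulr1.
  have -> : g1 c - (g1 0 + M * c) = (g2 d - M) * c.
    have -> : g1 c = g1 0 + g2 d * c by rewrite -[c in g2 d * c]subr0 -hd; ring.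
    ring.
  rewrite pmulr_lle0 //. by rewrite subr_le0.
rewrite /h expr1n expr0n /= !mulr0 !mulr1 !addr0 subr0.
lra.
Qed.
Lemma deriv_sum {R : realType} {n : nat} (f : 'rV[R]_n -> R) (y v : 'rV[R]_n) :
  differentiable f y -> 'D_v f y = \sum_(i < n) v 0 i * partial f i y.
Proof.
move=> df.
rewrite deriveE //.
have Hv : v = \sum_(i < n) v 0 i *: ebasis R i.
  rewrite {1}[v]matrix_sum_delta big_ord1. by [].
rewrite {1}Hv.
rewrite linear_sum; apply: eq_bigr => i _.
rewrite linearZ /= /partial deriveE //.
Qed.
Lemma line_derive {R : realType} {n : nat} (F : 'rV[R]_n -> R) (y v : 'rV[R]_n) (t : R) :
  derivable F (y + t *: v) v ->
  is_derive t (1:R) (fun s : R => F (y + s *: v)) ('D_v F (y + t *: v)).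
Proof.
move=> dF.
have E : (fun h : R => h^-1 *: (((fun s : R => F (y + s *: v)) \o shift t) (h *: (1:R)) - F (y + t *: v)))
  = (fun h : R => h^-1 *: ((F \o shift (y + t *: v)) (h *: v) - F (y + t *: v))).
  apply/funext => h /=. congr (_ *: (F _ - _)).
  rewrite /shift /=.
  rewrite [X in (X + t) *: v]/GRing.scale /= mulr1.
  by rewrite scalerDl addrCA.
split; first by rewrite /derivable E.
by rewrite /derive E.
Qed.

Lemma line2 {R : realType} {n : nat} (f : 'rV[R]_n -> R) (y v : 'rV[R]_n) (t : R) :
  C2 f ->
  is_derive t (1:R) (fun s : R => \sum_(i < n) v 0 i * partial f i (y + s *: v))
    (quadf (hessian f (y + t *: v)) v).
Proof.
move=> [d0 [d1 d2]].
have E : (fun s : R => \sum_(i < n) v 0 i * partial f i (y + s *: v)) =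
   \sum_(i < n) (fun s : R => v 0 i * partial f i (y + s *: v)).
  by rewrite fct_sumE.
rewrite E.
have H : forall i : 'I_n, is_derive t (1:R) (fun s : R => v 0 i * partial f i (y + s *: v))
   (v 0 i *: 'D_v (partial f i) (y + t *: v)).
  move=> i; have K := is_deriveZ (v 0 i) (line_derive (partial f i) y v t (diff_derivable (d1 i (y + t *: v)))). exact: K.
apply: (is_derive_eq (is_derive_sum H)).
rewrite /quadf !mxE.
apply: eq_bigr => i _.
rewrite deriv_sum // !mxE mulr_suml /GRing.scale /= mulr_sumr.
apply: eq_bigr => j _.
rewrite !mxE. ring.
Qed.
Lemma conv1d {R : realType} (g : R -> R) (D S : R) :
  is_derive (0:R) (1:R) g D ->
  (forall s : R, 0 < s <= 1 -> g s - g 0 <= s * S) ->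
  D <= S.
Proof.
move=> [dg vg] hc.
rewrite leNgt; apply/negP => SD.
have cv : (h^-1 *: ((g \o shift 0) (h *: (1:R)) - g 0) @[h --> 0^'] --> D)%classic.
  by rewrite -vg; exact: dg.
have e0 : 0 < D - S by rewrite subr_gt0.
move/cvgrPdist_lt: cv => /(_ _ e0).
rewrite near_withinE => /nbhs_ballP [e e0' He].
pose s := Num.min (e / 2) 1.
have s0 : 0 < s by rewrite lt_min ltr01 andbT divr_gt0.
have s1 : s <= 1 by rewrite ge_min lexx orbT.
have se : s < e.
  rewrite /s gt_min; apply/orP; left. move: e0'; rewrite /= => e0'. lra.
have := He s.
rewrite /ball /= sub0r normrN gtr0_norm // => /(_ se (lt0r_neq0 s0)).
rewrite /shift /= addr0.
have -> : s%:A = s :> R by rewrite /GRing.scale /= mulr1.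
have := hc s; rewrite s0 s1 => /(_ isT) hs.
have : s^-1 * (g s - g 0) <= S.
  by rewrite ler_pdivrMl // .
move=> H1 H2.
have := ler_norm (D - s^-1 *: (g s - g 0)).
rewrite /GRing.scale /=. lra.
Qed.

Section Vec.
Context {R : realType} {n : nat}.
Implicit Types (u v : 'rV[R]_n).

Definition dotv u v : R := \sum_(i < n) u 0 i * v 0 i.
Definition sqv v : R := \sum_(i < n) v 0 i ^+ 2.

Lemma sqv_ge0 v : 0 <= sqv v.
Proof. by apply: sumr_ge0 => i _; rewrite sqr_ge0. Qed.

Lemma l2norm_sq v : l2norm v ^+ 2 = sqv v.
Proof. by rewrite /l2norm sqr_sqrtr // sqv_ge0. Qed.

Lemma l2norm_ge0 v : 0 <= l2norm v.
Proof. exact: sqrtr_ge0. Qed.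

Lemma sqvZ (t : R) v : sqv (t *: v) = t ^+ 2 * sqv v.
Proof. rewrite /sqv mulr_sumr; apply: eq_bigr => i _; rewrite !mxE; ring. Qed.

Lemma dotvZ (t : R) u v : dotv (t *: u) v = t * dotv u v.
Proof. rewrite /dotv mulr_sumr; apply: eq_bigr => i _; rewrite !mxE; ring. Qed.

Lemma l2normZ (t : R) v : l2norm (t *: v) = `|t| * l2norm v.
Proof.
rewrite /l2norm -/(sqv _) -/(sqv v) sqvZ sqrtrM ?sqr_ge0 //.
by rewrite sqrtr_sqr.
Qed.

Lemma sqv_sub u (t : R) v :
  sqv (u - t *: v) = sqv u - 2 * t * dotv u v + t ^+ 2 * sqv v.
Proof.
rewrite /sqv /dotv !mulr_sumr -sumrB -big_split /=.
apply: eq_bigr => i _; rewrite !mxE; ring.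
Qed.

Lemma sqv0 v : sqv v = 0 -> forall i, v 0 i = 0.
Proof.
move=> h i; apply/eqP; rewrite -sqrf_eq0; apply/eqP.
by apply: (psumr_eq0P _ h) => // j _; rewrite sqr_ge0.
Qed.

Lemma cs_sq u v : dotv u v ^+ 2 <= sqv u * sqv v.
Proof.
have hB := sqv_ge0 v.
case: (ltrP 0 (sqv v)) => hv; last first.
  have B0 : sqv v = 0 by apply/eqP; rewrite eq_le hv hB.
  have -> : dotv u v = 0.
    by rewrite /dotv big1 // => i _; rewrite (sqv0 _ B0) mulr0.
  by rewrite B0 mulr0 expr0n.
have := sqv_ge0 (sqv v *: u - dotv u v *: v).
rewrite sqv_sub sqvZ dotvZ => h.
have : 0 <= sqv v * (sqv u * sqv v - dotv u v ^+ 2) by nra.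
rewrite pmulr_rge0 // subr_ge0 //.
Qed.

Lemma cs u v : dotv u v <= l2norm u * l2norm v.
Proof.
case: (lerP (dotv u v) 0) => h.
  apply: le_trans h _; exact: mulr_ge0 (l2norm_ge0 u) (l2norm_ge0 v).
rewrite /l2norm -sqrtrM ?sqv_ge0 //.
have -> : dotv u v = Num.sqrt (dotv u v ^+ 2) by rewrite sqrtr_sqr gtr0_norm.
by rewrite ler_sqrt ?mulr_ge0 ?sqv_ge0 // cs_sq.
Qed.

End Vec.
Lemma l2norm0 (R : realType) (n : nat) : l2norm (0 : 'rV[R]_n) = 0.
Proof. by rewrite /l2norm big1 ?sqrtr0 // => i _; rewrite mxE expr0n. Qed.

Theorem lemma8 (R : realType) (n : nat) (f : 'rV[R]_n -> R) (gamma mu : R)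
  (x xstar : 'rV[R]_n) (Rad : R) :
  C2 f -> convex_fun f -> 0 < gamma -> 0 < mu ->
  second_order_robust gamma f -> mult_smooth mu f ->
  0 < Rad -> l2norm (x - xstar) <= Rad ->
  let x' := gd_step mu gamma f x in
  (f xstar < f x ->
     Num.min ((f x - f xstar) ^+ 2 / (4 * mu * f x * Rad ^+ 2))
             ((f x - f xstar) / (2 * gamma * Rad)) <= f x - f x') /\
  (f xstar < f x -> f xstar < f x' -> l2norm (x' - xstar) <= l2norm (x - xstar)) /\
  (f x <= f xstar -> f x' <= f x).
Proof.
move=> C2f cvx gam0 mu0 rob [fpos msm] R0 hR x'.
have fx0 := fpos x.
have [d0 _] := C2f.
set eta := step_size mu gamma f x.
have eta0 : 0 <= eta.
  rewrite /eta /step_size; case: eqP => _.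
    by rewrite divr_ge0 // ltW // !mulr_gt0.
  rewrite le_min; apply/andP; split; apply: divr_ge0 => //.
    by rewrite ltW // !mulr_gt0.
  by rewrite mulr_ge0 ?l2norm_ge0 // ltW.
have etaA : mu * f x * eta <= 1 / 2.
  have h : eta <= 1 / (2 * mu * f x).
    rewrite /eta /step_size; case: eqP => _ //.
    by rewrite ge_min lexx.
  have -> : 1 / 2 = mu * f x * (1 / (2 * mu * f x)).
    field. by rewrite !lt0r_neq0.
  by rewrite ler_wpM2l // mulr_ge0 // ltW.
have etaB : eta * l2norm (grad f x) <= 1 / gamma.
  rewrite /eta /step_size; case: eqP => hg.
    by rewrite hg l2norm0 mulr0 divr_ge0 // ltW.
  have := l2norm_ge0 (grad f x); rewrite le_eqVlt => /orP [/eqP <-|gp].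
    by rewrite mulr0 divr_ge0 // ltW.
  apply: (@le_trans _ _ (1 / (gamma * l2norm (grad f x)) * l2norm (grad f x))).
    by rewrite ler_wpM2r ?l2norm_ge0 // ge_min lexx orbT.
  rewrite le_eqVlt; apply/orP; left; apply/eqP; field.
  by rewrite !lt0r_neq0.
pose v := - (eta *: grad f x).
have x'E : x' = x + v by [].
have sumv : \sum_(i < n) v 0 i * partial f i x = - (eta * sqv (grad f x)).
  rewrite /sqv mulr_sumr -sumrN; apply: eq_bigr => i _; rewrite !mxE; ring.
have nv : l2norm v ^+ 2 = eta ^+ 2 * sqv (grad f x).
  by rewrite l2norm_sq /v -scaleNr sqvZ sqrrN.
have desc : eta * sqv (grad f x) / 2 <= f x - f x'.
  have T := @taylor2 R (fun s => f (x + s *: v))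
    (fun s => \sum_(i < n) v 0 i * partial f i (x + s *: v))
    (fun s => quadf (hessian f (x + s *: v)) v)
    (2 * (mu * f x * l2norm v ^+ 2)).
  have T1 : forall t : R, is_derive t (1:R) (fun s => f (x + s *: v))
      (\sum_(i < n) v 0 i * partial f i (x + t *: v)).
    move=> t; have K := line_derive f x v t (diff_derivable (d0 (x + t *: v))).
    by rewrite deriv_sum in K.
  have T2 : forall t : R, is_derive t (1:R)
      (fun s => \sum_(i < n) v 0 i * partial f i (x + s *: v))
      (quadf (hessian f (x + t *: v)) v).
    by move=> t; exact: line2.
  have T3 : forall t : R, 0 <= t <= 1 ->
      quadf (hessian f (x + t *: v)) v <= 2 * (mu * f x * l2norm v ^+ 2).
    move=> t /andP [t0 t1].
    have hd : l2norm ((x + t *: v) - x) <= 1 / gamma.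
      rewrite addrC addKr l2normZ /v -scaleNr l2normZ normrN ger0_norm // ger0_norm //.
      apply: le_trans etaB.
      rewrite -[X in _ <= X]mul1r ler_wpM2r //.
      by rewrite mulr_ge0 // l2norm_ge0.
    have [_ r2] := rob x (x + t *: v) hd v.
    apply: le_trans r2 _.
    by rewrite ler_wpM2l // msm.
  have := T T1 T2 T3.
  rewrite scale1r scale0r addr0 sumv -x'E nv => H.
  have : mu * f x * eta * (eta * sqv (grad f x)) <= 1 / 2 * (eta * sqv (grad f x)).
    by rewrite ler_wpM2r // mulr_ge0 // sqv_ge0.
  lra.
have G0 : 0 <= sqv (grad f x) := sqv_ge0 _.
have hcvx : f x - f xstar <= dotv (x - xstar) (grad f x).
  have K1 : is_derive (0:R) (1:R) (fun s => f (x + s *: (xstar - x)))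
      (\sum_(i < n) (xstar - x) 0 i * partial f i x).
    have K := line_derive f x (xstar - x) 0 (diff_derivable (d0 (x + 0 *: (xstar - x)))).
    rewrite deriv_sum in K; last exact: d0.
    by rewrite scale0r addr0 in K.
  have K2 : forall s : R, 0 < s <= 1 ->
      f (x + s *: (xstar - x)) - f (x + 0 *: (xstar - x)) <= s * (f xstar - f x).
    move=> s /andP [s0 s1].
    have := cvx xstar x s; rewrite (ltW s0) s1 => /(_ isT).
    rewrite scale0r addr0 scalerBr scalerBl scale1r addrCA.
    lra.
  have := conv1d _ _ _ K1 K2.
  have -> : \sum_(i < n) (xstar - x) 0 i * partial f i x = - dotv (x - xstar) (grad f x).
    rewrite /dotv -sumrN; apply: eq_bigr => i _; rewrite !mxE; ring.
  lra.
have P3 : f x <= f xstar -> f x' <= f x.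
  move=> _; have : 0 <= eta * sqv (grad f x) by rewrite mulr_ge0.
  lra.
have x'sub : x' - xstar = (x - xstar) - eta *: grad f x.
  by rewrite /x' /gd_step addrAC.
have P2 : f xstar < f x -> f xstar < f x' -> l2norm (x' - xstar) <= l2norm (x - xstar).
  move=> D0 D1.
  rewrite /l2norm -/(sqv _) -/(sqv (x - xstar)) x'sub.
  rewrite ler_sqrt ?sqv_ge0 // sqv_sub.
  have : eta * sqv (grad f x) <= 2 * dotv (x - xstar) (grad f x) by lra.
  move=> h; nra.
split; last by split.
move=> D0.
set D := f x - f xstar.
have hD : D <= l2norm (grad f x) * Rad.
  apply: le_trans hcvx _.
  apply: le_trans (cs _ _) _.
  by rewrite mulrC ler_wpM2l // ?l2norm_ge0.
have Dp : 0 < D by rewrite /D subr_gt0.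
have gp : 0 < l2norm (grad f x).
  rewrite lt_neqAle l2norm_ge0 andbT; apply/eqP => h0.
  by rewrite -h0 mul0r in hD; lra.
have gne : grad f x != 0.
  by apply/eqP => h0; rewrite h0 l2norm0 in gp; rewrite ltxx in gp.
have GE : sqv (grad f x) = l2norm (grad f x) ^+ 2 by rewrite l2norm_sq.
rewrite GE in desc.
have h1 : D ^+ 2 <= (l2norm (grad f x) * Rad) ^+ 2.
  nra.
move: desc; rewrite /eta /step_size (negbTE gne) => desc.
have [hab|hab] := lerP (1 / (2 * mu * f x)) (1 / (gamma * l2norm (grad f x))).
  rewrite min_l // in desc.
  rewrite ge_min; apply/orP; left; apply: le_trans desc.
  have -> : 1 / (2 * mu * f x) * l2norm (grad f x) ^+ 2 / 2 =
    (l2norm (grad f x) * Rad) ^+ 2 / (4 * mu * f x * Rad ^+ 2).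
    field. by rewrite !lt0r_neq0.
  by rewrite ler_wpM2r // invr_ge0 ltW // !mulr_gt0 // exprn_gt0.
rewrite (min_r (ltW hab)) in desc.
rewrite ge_min; apply/orP; right; apply: le_trans desc.
have -> : 1 / (gamma * l2norm (grad f x)) * l2norm (grad f x) ^+ 2 / 2 =
  (l2norm (grad f x) * Rad) / (2 * gamma * Rad).
  field. by rewrite !lt0r_neq0.
by rewrite ler_wpM2r // invr_ge0 ltW // !mulr_gt0.
Qed.
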